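(* Let $\psi$ be an additive character of $\mathbb{F}_{q^2}$ of conductor $q^2$. Then: (a) If $g\in H'$, then $gag^{-1}\in H_0'$ and $\widetilde\psi(gag^{-1})=\widetilde\psi(a)$ for all $a\in H_0'$. (b) Let $h$ be odd. If $g\in\mathcal U\setminus H'$, then there exists $a\in H_0'$ such that $gag^{-1}\in H_0'$ but $\widetilde\psi(gag^{-1})\ne\widetilde\psi(a)$. (c) Let $h$ be even and let $\theta$ be any extension of $\widetilde\psi$ to a character of $H_1'$. If $g\in\mathcal U\setminus H'$, then there exists $a\in H_1'$ such that $gag^{-1}\in H_1'$ but $\theta(gag^{-1})\ne\theta(a)$.
   Context: Let $p$ be a prime, $q$ a power of $p$, $\ell\ne p$, and $h\ge2$ an integer. For a commutative $\mathbb{F}_q$-algebra $A$, $U_h^{2,q}(A)$ is the set of formal expressions $1+\sum_{i=1}^{2(h-1)}a_i\tau^i$ ($a_i\in A$) with multiplication obtained by extending $(a\tau^i)(b\tau^j)=ab^{q^i}\tau^{i+j}$ bi-additively, $\tau^0=1$, $\tau^k=0$ for $k>2(h-1)$. In $\mathcal U=U_h^{2,q}(\mathbb{F}_{q^2})$ define: $H_0'=\{1+\sum a_i\tau^i: a_i=0\text{ unless } i=2(h-1)\text{ or } i\text{ is odd with } i>h-1\}$; if $h$ is odd, $H'=\{1+\sum a_i\tau^i: a_i=0\text{ for all odd } i\le h-1\}$; if $h$ is even, $H'=\{1+\sum a_i\tau^i: a_i=0\text{ for odd } i<h-1,\ a_{h-1}\in\mathbb{F}_q\}$ and $H_1'=\{1+\sum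 a_i\tau^i: a_i=0\text{ unless } i=2(h-1)\text{ or } i\text{ is odd with } i\ge h-1;\ a_{h-1}\in\mathbb{F}_q\}$. An additive character $\psi\colon\mathbb{F}_{q^2}\to\overline{\mathbb{Q}}_\ell^\times$ has conductor $q^2$ if there exists $x$ with $\psi(x^q)\ne\psi(x)$; $\widetilde\psi$ is the character $1+\sum a_i\tau^i\mapsto\psi(a_{2(h-1)})$ of $H_0'$. *)

(* Defs.v *)
From HB Require Import structures.
From mathcomp Require Import all_boot all_order all_algebra all_field.
Set Implicit Arguments. Unset Strict Implicit. Unset Printing Implicit Defensive.
Import GRing.Theory.
Local Open Scope ring_scope.

(* Elements of U_h^{2,q}(F) are 1 + sum_{k=1}^{N} a_k tau^k with N = 2(h-1).
   They are stored as finite functions u : 'I_N -> F, with u i = a_{i+1}. *)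
Definition Nh (h : nat) : nat := (h.-1).*2.
Definition Uel (F : finFieldType) (h : nat) := {ffun 'I_(Nh h) -> F}.

Definition coef (F : finFieldType) (h : nat) (u : Uel F h) (k : nat) : F :=
  match k with
  | 0 => 1
  | k'.+1 => match insub k' with Some i => u i | None => 0 end
  end.

(* product: (a tau^i)(b tau^j) = a b^{q^i} tau^{i+j}, extended bi-additively,
   truncated above degree N *)
Definition mulU (F : finFieldType) (q h : nat) (u v : Uel F h) : Uel F h :=
  [ffun k : 'I_(Nh h) =>
     \sum_(i < k.+2) coef u i * (coef v (k.+1 - i)) ^+ (q ^ i)].

Definition oneU (F : finFieldType) (h : nat) : Uel F h := [ffun _ => 0].

Definition invU (F : finFieldType) (q h : nat) (u : Uel F h) : Uel F h :=
  odflt (oneU F h) [pick v : Uel F h | mulU q u v == oneU F h].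

Definition conjU (F : finFieldType) (q h : nat) (g a : Uel F h) : Uel F h :=
  mulU q (mulU q g a) (invU q g).

Definition inH0 (F : finFieldType) (h : nat) (u : Uel F h) : bool :=
  [forall k : 'I_(Nh h), (u k != 0) ==>
     ((k.+1 == Nh h) || (odd k.+1 && (h.-1 < k.+1)%N))].

(* H' (depending on the parity of h); F_q = {x | x^q = x} *)
Definition inH (F : finFieldType) (q h : nat) (u : Uel F h) : bool :=
  if odd h then
    [forall k : 'I_(Nh h), (odd k.+1 && (k.+1 <= h.-1)%N) ==> (u k == 0)]
  else
    [forall k : 'I_(Nh h), (odd k.+1 && (k.+1 < h.-1)%N) ==> (u k == 0)]
    && (coef u h.-1 ^+ q == coef u h.-1).

Definition inH1 (F : finFieldType) (q h : nat) (u : Uel F h) : bool :=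
  [forall k : 'I_(Nh h), (u k != 0) ==>
     ((k.+1 == Nh h) || (odd k.+1 && (h.-1 <= k.+1)%N))]
  && (coef u h.-1 ^+ q == coef u h.-1).

Definition psit (F : finFieldType) (h : nat) (psi : F -> algC) (u : Uel F h)
  : algC := psi (coef u (Nh h)).

Definition additive_char (F : finFieldType) (psi : F -> algC) : Prop :=
  (forall x y, psi (x + y) = psi x * psi y) /\ (forall x, psi x != 0).

(* Main.v *)
Require Import Defs.
From HB Require Import structures.
From mathcomp Require Import all_boot all_order all_algebra all_field.
From mathcomp Require Import zify ring.
Import GRing.Theory.
Local Open Scope ring_scope.
Set Implicit Arguments. Unset Strict Implicit. Unset Printing Implicit Defensive.

Lemma tri (R : nmodType) n (T : nat -> nat -> R) :
  \sum_(i < n.+1) \sum_(j < i.+1) T j (i - j)%N =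
  \sum_(j < n.+1) \sum_(k < (n - j).+1) T j k.
Proof.
elim: n => [|n IH]; first by rewrite !big_ord1.
rewrite big_ord_recr /= IH.
rewrite [RHS]big_ord_recr /= subnn big_ord1.
rewrite [\sum_(j < n.+2) _]big_ord_recr /= subnn addrA; congr (_ + _).
rewrite -big_split /=; apply: eq_bigr => j _.
have hj : (j <= n)%N by rewrite -ltnS ltn_ord.
by rewrite subSn // [RHS]big_ord_recr.
Qed.


Section U.
Variables (F : finFieldType) (q h : nat).
Hypothesis q_gt0 : (0 < q)%N.
Hypothesis HqD : forall x y : F, (x + y) ^+ q = x ^+ q + y ^+ q.
Hypothesis Hqq : forall x : F, (x ^+ q) ^+ q = x.

Local Notation N := (Nh h).
Local Notation U := (Uel F h).
Local Notation mul := (@mulU F q h).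
Local Notation c := (@coef F h).
Local Notation one := (oneU F h).

Definition fr (i : nat) (x : F) := x ^+ (q ^ i).

Lemma frS i x : fr i.+1 x = fr i x ^+ q.
Proof. by rewrite /fr expnSr exprM. Qed.

Lemma frD i x y : fr i (x + y) = fr i x + fr i y.
Proof. by elim: i => [|i IH]; rewrite ?frS ?IH // /fr !expr1. Qed.

Lemma frM i x y : fr i (x * y) = fr i x * fr i y.
Proof. by rewrite /fr exprMn. Qed.

Lemma fr0 i : fr i 0 = 0.
Proof. by rewrite /fr expr0n expn_eq0 eqn0Ngt q_gt0. Qed.

Lemma fr1 i : fr i 1 = 1.
Proof. by rewrite /fr expr1n. Qed.

Lemma frN i x : fr i (- x) = - fr i x.
Proof. by apply/eqP; rewrite -subr_eq0 opprK -frD addNr fr0. Qed.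

Lemma frB i x y : fr i (x - y) = fr i x - fr i y.
Proof. by rewrite frD frN. Qed.

Lemma fr_sum i n (f : 'I_n -> F) : fr i (\sum_(j < n) f j) = \sum_(j < n) fr i (f j).
Proof. by apply: (big_morph (fr i)); [exact: frD | exact: fr0]. Qed.

Lemma frfr i j x : fr i (fr j x) = fr (j + i) x.
Proof. by rewrite /fr -exprM expnD. Qed.

Lemma fr_odd i x : fr i x = if odd i then x ^+ q else x.
Proof.
elim: i => [|i IH]; first by rewrite /fr expr1.
by rewrite frS IH /=; case: (odd i) => //=.
Qed.

Lemma fr_0 x : fr 0 x = x. Proof. by rewrite /fr expr1. Qed.

Lemma coef_ord (u : U) (i : 'I_N) : c u i.+1 = u i.
Proof. by rewrite /coef valK. Qed.

Lemma coef_gt (u : U) k : (N < k)%N -> c u k = 0.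
Proof.
case: k => // k Hk; rewrite /coef insubF //; apply/negbTE; rewrite -leqNgt; lia.
Qed.

Lemma coef0 (u : U) : c u 0 = 1. Proof. by []. Qed.

Lemma eqU (u v : U) : (forall n, (0 < n <= N)%N -> c u n = c v n) -> u = v.
Proof. by move=> H; apply/ffunP => i; rewrite -!coef_ord H //= ltn_ord. Qed.

Definition mkU (f : nat -> F) : U := [ffun k : 'I_N => f k.+1].

Lemma coef_mkU f n : (0 < n <= N)%N -> c (mkU f) n = f n.
Proof.
case: n => // n Hn; have Hn' : (n < N)%N by [].
by rewrite (coef_ord _ (Ordinal Hn')) ffunE.
Qed.

Lemma coef_mul (u v : U) n : (n <= N)%N ->
  c (mul u v) n = \sum_(i < n.+1) c u i * fr i (c v (n - i)).
Proof.
case: n => [_|n Hn]; first by rewrite big_ord1 /= fr1 mulr1.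
by rewrite (coef_ord _ (Ordinal Hn)) ffunE.
Qed.

Lemma mulA (u v w : U) : mul (mul u v) w = mul u (mul v w).
Proof.
apply: eqU => n /andP[_ hn].
rewrite !coef_mul //.
pose T j k := c u j * fr j (c v k) * fr (j + k) (c w (n - (j + k))).
transitivity (\sum_(i < n.+1) \sum_(j < i.+1) T j (i - j)%N).
  apply: eq_bigr => i _; rewrite coef_mul; last first.
    by apply: leq_trans hn; rewrite -ltnS ltn_ord.
  rewrite mulr_suml; apply: eq_bigr => j _; rewrite /T subnKC //.
  by rewrite -ltnS ltn_ord.
rewrite tri; apply: eq_bigr => j _.
rewrite coef_mul; last by apply: leq_trans hn; exact: leq_subr.
rewrite fr_sum mulr_sumr; apply: eq_bigr => k _.
by rewrite /T frM frfr mulrA -subnDA [(k + j)%N]addnC.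
Qed.

Lemma coef_one n : (0 < n)%N -> c one n = 0.
Proof.
case: n => // n _; rewrite /coef; case: insubP => // i _ _; by rewrite ffunE.
Qed.

Lemma mulU1 (u : U) : mul u one = u.
Proof.
apply: eqU => n /andP[n0 hn]; rewrite coef_mul //.
rewrite big_ord_recr /= subnn big1 ?add0r ?fr1 ?mulr1 // => i _.
by rewrite coef_one ?mulr0 ?fr0 ?mulr0 // subn_gt0.
Qed.

Lemma mul1U (u : U) : mul one u = u.
Proof.
apply: eqU => n /andP[n0 hn]; rewrite coef_mul //.
rewrite big_ord_recl big1 ?addr0; last by move=> i _; rewrite coef_one ?mul0r.
by rewrite subn0 fr_0 mul1r.
Qed.

Lemma mulU_inj (u : U) : injective (mul u).
Proof.
move=> x y Hxy; apply: eqU.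
suff H : forall n, (n <= N)%N -> forall k, (k <= n)%N -> c x k = c y k.
  by move=> n /andP[_ hn]; exact: (H n hn n (leqnn n)).
elim=> [|n IH] hn k hk.
  by move: hk; rewrite leqn0 => /eqP ->.
rewrite leq_eqVlt in hk; case/orP: hk => [/eqP ->|hk]; last first.
  by apply: IH => //; exact: ltnW.
have : c (mul u x) n.+1 = c (mul u y) n.+1 by rewrite Hxy.
rewrite !coef_mul // !(big_ord_recl n.+1) !subn0 !fr_0 !coef0 !mul1r.
under eq_bigr => i _ do rewrite (IH (ltnW hn) _ (leq_subr i n : (n.+1 - lift ord0 i <= n)%N)).
by move/addIr.
Qed.

Lemma invU_r (g : U) : mul g (invU q g) = one.
Proof.
rewrite /invU; case: pickP => [v /eqP //|H].
have [f _ fK] := injF_bij (@mulU_inj g).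
by have := H (f one); rewrite /= fK eqxx.
Qed.

Lemma invU_l (g : U) : mul (invU q g) g = one.
Proof.
have Hw := invU_r (invU q g).
have E : g = invU q (invU q g).
  by rewrite -[LHS]mulU1 -Hw -mulA invU_r mul1U.
by rewrite [X in mul _ X]E invU_r.
Qed.

Lemma conj_spec (g a : U) : mul (conjU q g a) g = mul g a.
Proof. by rewrite /conjU mulA invU_l mulU1. Qed.

Lemma sum_ends n (G : nat -> F) : (0 < n)%N ->
  \sum_(i < n.+1) G i = G 0%N + G n + \sum_(i < n.+1 | (0 < i < n)%N) G i.
Proof.
move=> n0; rewrite (bigD1 ord0) //= (bigD1 ord_max) /=; last first.
  by rewrite -(inj_eq val_inj) /= -lt0n.
rewrite addrA; congr (_ + _); apply: eq_bigl => i.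
rewrite -!(inj_eq val_inj) /=; have := ltn_ord i; lia.
Qed.

Lemma conj_coef (g a : U) n : (0 < n <= N)%N ->
  c (conjU q g a) n = c a n
    + \sum_(i < n.+1 | (0 < i < n)%N) c g i * fr i (c a (n - i))
    - \sum_(i < n.+1 | (0 < i < n)%N) c (conjU q g a) i * fr i (c g (n - i)).
Proof.
move=> /andP[n0 hn].
have E : c (mul (conjU q g a) g) n = c (mul g a) n by rewrite conj_spec.
rewrite coef_mul // [c (mul g a) n]coef_mul // in E.
rewrite (sum_ends (fun i => c (conjU q g a) i * fr i (c g (n - i)))) // in E.
rewrite (sum_ends (fun i => c g i * fr i (c a (n - i)))) // in E.
rewrite !subn0 !subnn !coef0 !fr_0 !fr1 !mul1r !mulr1 in E.
apply: (addrI (c g n)); apply: (addIr (\sum_(i < n.+1 | (0 < i < n)%N)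
   c (conjU q g a) i * fr i (c g (n - i)))).
by rewrite addrA E subrK addrA (addrC (c g n)).
Qed.

Lemma N_even : ~~ odd N.
Proof. by rewrite /Nh odd_double. Qed.

Lemma odd_sub_even n i : (i <= n)%N -> ~~ odd n -> odd (n - i) = odd i.
Proof. by move=> hi hn; rewrite oddB // (negbTE hn). Qed.

Section Gen.
Variables (g a : U) (s r : nat).
Hypothesis Ha : forall i, (0 < i < N)%N -> c a i != 0 -> odd i && (s <= i)%N.
Hypothesis Hg : forall j, odd j -> (j < r)%N -> c g j = 0.
Hypothesis Hsr : (N <= s + r)%N.
Local Notation cc := (conjU q g a).

Lemma gen_low n : (0 < n < N)%N -> ((n <= s)%N || ~~ odd n) -> c cc n = c a n.
Proof.
elim/ltn_ind: n => n IH /andP[n0 nN] hn.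
rewrite conj_coef; last by rewrite n0 ltnW.
rewrite big1 ?[X in _ - X]big1 ?subr0 ?addr0 //.
- move=> i /andP[i0 iN].
  have [->|nz] := eqVneq (c cc i) 0; first by rewrite mul0r.
  have [oi si] : odd i /\ (s <= i)%N.
    case/orP: (orbN ((i <= s)%N || ~~ odd i)) => H.
      have hi : (0 < i < N)%N by apply/andP; lia.
      rewrite (IH i) // in nz.
      by apply/andP; apply: Ha nz.
    by move: H; rewrite negb_or negbK => /andP[]; split=> //; lia.
  case/orP: hn => hn; first by lia.
  rewrite Hg ?fr0 ?mulr0 //; last by lia.
  by rewrite (odd_sub_even (ltnW iN) hn).
- move=> i /andP[i0 iN].
  have [->|nz] := eqVneq (c a (n - i)) 0; first by rewrite fr0 mulr0.
  have /andP[oi si] := Ha (ltac:(apply/andP; lia) : (0 < n - i < N)%N) nz.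
  case/orP: hn => hn; first by lia.
  rewrite Hg ?mul0r //; last by lia.
  by rewrite -(odd_sub_even (ltnW iN) hn).
Qed.

Lemma gen_nz i : (0 < i < N)%N -> c cc i != 0 -> odd i && (s <= i)%N.
Proof.
move=> hi nz; case/orP: (orbN ((i <= s)%N || ~~ odd i)) => H.
  by rewrite gen_low // in nz; apply: Ha nz.
by move: H; rewrite negb_or negbK => /andP[] H1 H2; rewrite H2 /=; lia.
Qed.

Lemma gen_top_lt : (N < s + r)%N -> (0 < N)%N -> c cc N = c a N.
Proof.
move=> Hlt N0; rewrite conj_coef; last by rewrite N0 leqnn.
rewrite big1 ?[X in _ - X]big1 ?subr0 ?addr0 //.
- move=> i /andP[i0 iN].
  have [->|nz] := eqVneq (c cc i) 0; first by rewrite mul0r.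
  have /andP[oi si] := gen_nz (ltac:(apply/andP; lia) : (0 < i < N)%N) nz.
  rewrite Hg ?fr0 ?mulr0 //; last by lia.
  by rewrite (odd_sub_even (ltnW iN) N_even).
- move=> i /andP[i0 iN].
  have [->|nz] := eqVneq (c a (N - i)) 0; first by rewrite fr0 mulr0.
  have /andP[oi si] := Ha (ltac:(apply/andP; lia) : (0 < N - i < N)%N) nz.
  rewrite Hg ?mul0r //; last by lia.
  by rewrite -(odd_sub_even (ltnW iN) N_even).
Qed.

Lemma gen_top_eq : N = (s + r)%N -> (0 < s)%N -> (0 < r)%N ->
  c cc N = c a N + c g r * fr r (c a s) - c a s * fr s (c g r).
Proof.
move=> Heq s0 r0.
have hr : (r < N.+1)%N by lia.
have hs : (s < N.+1)%N by lia.
rewrite conj_coef; last by apply/andP; lia.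
rewrite (bigD1 (Ordinal hr)) /=; last by apply/andP; lia.
rewrite [X in _ - X](bigD1 (Ordinal hs)) /=; last by apply/andP; lia.
have -> : (N - r = s)%N by lia.
have -> : (N - s = r)%N by lia.
rewrite gen_low; last 2 first.
- by apply/andP; lia.
- by rewrite leqnn.
rewrite big1 ?[X in _ - (_ + X)]big1 ?addr0 //.
- move=> i /andP[/andP[i0 iN] ne]; rewrite -(inj_eq val_inj) /= in ne.
  have [->|nz] := eqVneq (c cc i) 0; first by rewrite mul0r.
  have /andP[oi si] := gen_nz (ltac:(apply/andP; lia) : (0 < i < N)%N) nz.
  rewrite Hg ?fr0 ?mulr0 //; last by lia.
  by rewrite (odd_sub_even (ltnW iN) N_even).
- move=> i /andP[/andP[i0 iN] ne]; rewrite -(inj_eq val_inj) /= in ne.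
  have [->|nz] := eqVneq (c a (N - i)) 0; first by rewrite fr0 mulr0.
  have /andP[oi si] := Ha (ltac:(apply/andP; lia) : (0 < N - i < N)%N) nz.
  rewrite Hg ?mul0r //; last by lia.
  by rewrite -(odd_sub_even (ltnW iN) N_even).
Qed.

End Gen.

Hypothesis h2 : (2 <= h)%N.

Lemma N_gt0 : (0 < N)%N. Proof. rewrite /Nh; lia. Qed.

Lemma inH0_coef (u : U) : inH0 u ->
  forall n, (0 < n <= N)%N -> c u n != 0 -> (n == N) || (odd n && (h.-1 < n)%N).
Proof.
move/forallP => H n /andP[n0 nN]; case: n n0 nN => // n _ nN.
by rewrite (coef_ord u (Ordinal nN)); move/implyP: (H (Ordinal nN)).
Qed.

Lemma coef_inH0 (u : U) :
  (forall n, (0 < n <= N)%N -> c u n != 0 -> (n == N) || (odd n && (h.-1 < n)%N))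
  -> inH0 u.
Proof.
move=> H; apply/forallP => k; apply/implyP; rewrite -coef_ord; apply: H.
by rewrite /= ltn_ord.
Qed.

Lemma coef_inH1 (u : U) :
  (forall n, (0 < n <= N)%N -> c u n != 0 -> (n == N) || (odd n && (h.-1 <= n)%N))
  -> c u h.-1 ^+ q = c u h.-1 -> inH1 q u.
Proof.
move=> H Hq; apply/andP; split; last by apply/eqP.
apply/forallP => k; apply/implyP; rewrite -coef_ord; apply: H.
by rewrite /= ltn_ord.
Qed.

Lemma inH0_inH1 (u : U) : inH0 u -> inH1 q u.
Proof.
move=> H; apply: coef_inH1.
  move=> n hn nz; case/orP: (inH0_coef H hn nz) => [->//|/andP[o l]].
  by rewrite o (ltnW l) orbT.
have -> : c u h.-1 = 0.
  apply/eqP; apply: contraT => nz.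
  have := inH0_coef H (ltac:(apply/andP; rewrite /Nh; lia) : (0 < h.-1 <= N)%N) nz.
  rewrite ltnn andbF orbF /Nh; lia.
by rewrite expr0n eqn0Ngt q_gt0.
Qed.

Lemma inH_low (g : U) : inH q g -> forall j, odd j -> (j < h.-1)%N -> c g j = 0.
Proof.
move=> Hg j; case: j => // j oj jl.
have jN : (j < N)%N by rewrite /Nh; lia.
rewrite (coef_ord g (Ordinal jN)); apply/eqP.
move: Hg; rewrite /inH; case: ifP => _.
  by move/forallP/(_ (Ordinal jN))/implyP; apply; apply/andP; split => //; exact: ltnW.
by case/andP=> /forallP/(_ (Ordinal jN))/implyP H _; apply: H; apply/andP; split.
Qed.

Lemma notinH_odd (g : U) : odd h -> ~~ inH q g ->
  exists j, [&& odd j, (0 < j)%N, (j < h)%N & c g j != 0].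
Proof.
move=> ho; rewrite /inH ho => /forallPn [k]; rewrite negb_imply.
case/andP=> /andP[ok kl] nz; exists k.+1; rewrite ok (coef_ord g k) nz /= andbT.
lia.
Qed.

Lemma notinH_even (g : U) : ~~ odd h -> ~~ inH q g ->
  (exists j, [&& odd j, (0 < j)%N, (j < h.-1)%N & c g j != 0]) \/
  ((forall j, odd j -> (j < h.-1)%N -> c g j = 0) /\ c g h.-1 ^+ q != c g h.-1).
Proof.
move=> he; rewrite /inH (negbTE he).
case: (boolP [forall k : 'I_N, (odd k.+1 && (k.+1 < h.-1)%N) ==> (g k == 0)]) => H /=.
  move=> H2; right; split => //.
  move=> j; case: j => // j oj jl.
  have jN : (j < N)%N by rewrite /Nh; lia.
  rewrite (coef_ord g (Ordinal jN)); apply/eqP.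
  by move/forallP/(_ (Ordinal jN))/implyP: H; apply; apply/andP; split.
move=> _; left; move/forallPn: H => [k]; rewrite negb_imply.
case/andP=> /andP[ok kl] nz; exists k.+1; rewrite ok (coef_ord g k) nz kl.
by [].
Qed.

Lemma min_odd (g : U) b : (exists j, [&& odd j, (0 < j)%N, (j < b)%N & c g j != 0]) ->
  exists r, [/\ odd r, (0 < r)%N, (r < b)%N, c g r != 0 &
                forall j, odd j -> (j < r)%N -> c g j = 0].
Proof.
move=> ex.
have ex' : exists j, (fun j => [&& odd j, (0 < j)%N, (j < b)%N & c g j != 0]) j := ex.
case: (ex_minnP ex') => r /and4P[or r0 rb nz] Hmin.
exists r; split=> // j oj jr; apply/eqP; apply: contraT => nzj.
have := Hmin j; rewrite oj nzj /=.
have -> : (0 < j)%N by case: j oj {jr nzj}.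
by rewrite (ltn_trans jr rb) /= => /(_ isT); rewrite leqNgt jr.
Qed.

Lemma expqB (x y : F) : (x - y) ^+ q = x ^+ q - y ^+ q.
Proof. by have := frB 1 x y; rewrite /fr expn1. Qed.

Section Psi.
Variable psi : F -> algC.
Hypothesis Hpsi : additive_char psi.
Variable w : F.
Hypothesis Hw : psi (w ^+ q) != psi w.

Lemma psi0 : psi 0 = 1.
Proof.
case: Hpsi => HD Hnz; apply: (mulfI (Hnz 0)); rewrite mulr1 -HD addr0 //.
Qed.

Lemma psiw : psi (w ^+ q - w) != 1.
Proof.
apply: contra Hw => /eqP H; case: Hpsi => HD _.
by rewrite -{1}(subrK w (w ^+ q)) HD H mul1r.
Qed.

Lemma partA (g a : U) : inH q g -> inH0 a ->
  inH0 (conjU q g a) /\ psit psi (conjU q g a) = psit psi a.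
Proof.
move=> Hg Ha.
have Ha' : forall i, (0 < i < N)%N -> c a i != 0 -> odd i && (h <= i)%N.
  move=> i /andP[i0 iN] nz.
  have := inH0_coef Ha (ltac:(apply/andP; lia) : (0 < i <= N)%N) nz.
  rewrite (ltn_eqF iN) /= => /andP[-> ?] /=; lia.
have Hsr : (N <= h + h.-1)%N by rewrite /Nh; lia.
have Hlt : (N < h + h.-1)%N by rewrite /Nh; lia.
split; last by rewrite /psit (gen_top_lt Ha' (inH_low Hg) Hsr Hlt N_gt0).
apply: coef_inH0 => n /andP[n0 nN] nz.
have [{}nN|->] : (n < N)%N \/ n = N; [lia| |by rewrite eqxx].
have := gen_nz Ha' (inH_low Hg) Hsr (ltac:(apply/andP; lia) : (0 < n < N)%N) nz.
case/andP=> -> ? /=; lia.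
Qed.

Lemma partB (g : U) r : odd r -> (0 < r)%N -> (r < h.-1)%N -> c g r != 0 ->
  (forall j, odd j -> (j < r)%N -> c g j = 0) ->
  exists a : U, [/\ inH0 a, inH0 (conjU q g a) &
        psit psi (conjU q g a) != psit psi a].
Proof.
move=> or r0 rh gnz Hg.
set y := c g r; set x := w / y ^+ q; set s := (N - r)%N.
pose a := mkU (fun n => if n == s then x else 0).
have os : odd s by rewrite /s odd_sub_even ?N_even //; rewrite /Nh; lia.
have hs : (h.-1 < s)%N by rewrite /s /Nh; lia.
have sN : (s < N)%N by rewrite /s /Nh; lia.
have ca : forall n, (0 < n <= N)%N -> c a n = if n == s then x else 0.
  by move=> n hn; rewrite coef_mkU.
have Ha : forall i, (0 < i < N)%N -> c a i != 0 -> odd i && (s <= i)%N.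
  move=> i /andP[i0 iN]; rewrite ca ?i0 ?(ltnW iN) //.
  by case: (eqVneq i s) => [->|]; rewrite ?os ?leqnn ?eqxx.
have Hsr : N = (s + r)%N by rewrite /s /Nh; lia.
exists a; split.
- apply: coef_inH0 => n hn; rewrite ca //.
  by case: (eqVneq n s) => [->|]; rewrite ?os ?hs ?orbT ?eqxx.
- apply: coef_inH0 => n /andP[n0 nN] nz.
  have [{}nN|->] : (n < N)%N \/ n = N; [lia| |by rewrite eqxx].
  have := gen_nz Ha Hg (eq_leq Hsr) (ltac:(apply/andP; lia) : (0 < n < N)%N) nz.
  case/andP=> -> ? /=; lia.
rewrite /psit (gen_top_eq Ha Hg (eq_leq Hsr) Hsr) ?ca; last 4 first.
- by apply/andP; rewrite (leq_trans _ (ltnW sN)) //; lia.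
- by rewrite N_gt0 leqnn.
- lia.
- by [].
rewrite eqxx (gtn_eqF sN) psi0 add0r !fr_odd or os.
have y0 : y != 0 by [].
have yq0 : y ^+ q != 0 by rewrite expf_neq0.
have -> : y * x ^+ q - x * y ^+ q = w ^+ q - w.
  rewrite /x expr_div_n Hqq mulrC divfK // divfK //.
exact: psiw.
Qed.

Lemma partC2 (g : U) (theta : U -> algC) : ~~ odd h ->
  (forall x y : U, inH1 q x -> inH1 q y -> theta (mul x y) = theta x * theta y) ->
  (forall x : U, inH1 q x -> theta x != 0) ->
  (forall a : U, inH0 a -> theta a = psit psi a) ->
  (forall j, odd j -> (j < h.-1)%N -> c g j = 0) -> c g h.-1 ^+ q != c g h.-1 ->
  exists a : U, [/\ inH1 q a, inH1 q (conjU q g a) &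
        theta (conjU q g a) != theta a].
Proof.
move=> he Hmul Hnz Hext Hg nq.
set y := c g h.-1; set r := h.-1; set s := (N - r)%N.
have sr : s = r by rewrite /s /r /Nh; lia.
have or : odd r by rewrite /r; case: h he h2 => // h' /=; rewrite negbK.
have yy : y - y ^+ q != 0 by rewrite subr_eq0 eq_sym.
set x := (w ^+ q - w) / (y - y ^+ q).
have xq : x ^+ q = x.
  rewrite /x expr_div_n !expqB !Hqq -opprB -[y ^+ q - y]opprB.
  by rewrite invrN mulrNN.
pose a := mkU (fun n => if n == s then x else 0).
have sN : (s < N)%N by rewrite /s /r /Nh; lia.
have s0 : (0 < s)%N by rewrite /s /r /Nh; lia.
have ca : forall n, (0 < n <= N)%N -> c a n = if n == s then x else 0.
  by move=> n hn; rewrite coef_mkU.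
have os : odd s by rewrite sr.
have Ha : forall i, (0 < i < N)%N -> c a i != 0 -> odd i && (s <= i)%N.
  move=> i /andP[i0 iN]; rewrite ca ?i0 ?(ltnW iN) //.
  by case: (eqVneq i s) => [->|]; rewrite ?os ?leqnn ?eqxx.
have Hsr : N = (s + r)%N by rewrite /s /r /Nh; lia.
have Hg' : forall j, odd j -> (j < r)%N -> c g j = 0 by [].
set cc := conjU q g a.
have ccs : c cc s = x.
  rewrite (gen_low Ha Hg' (eq_leq Hsr)) ?leqnn ?s0 ?sN // ca ?eqxx //.
  by rewrite s0 ltnW.
have cclow : forall n, (0 < n < s)%N -> c cc n = 0.
  move=> n /andP[n0 ns]; rewrite (gen_low Ha Hg' (eq_leq Hsr)) ?(ltnW ns) //; last first.
    by apply/andP; lia.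
  by rewrite ca ?(ltn_eqF ns) //; apply/andP; lia.
have ccN : c cc N = w ^+ q - w.
  rewrite /cc (gen_top_eq Ha Hg' (eq_leq Hsr) Hsr) ?ca; last 4 first.
  - by apply/andP; lia.
  - by rewrite N_gt0 leqnn.
  - lia.
  - by rewrite /r; lia.
  rewrite eqxx (gtn_eqF sN) add0r !fr_odd or os xq -/y.
  by rewrite mulrC -mulrBr /x divfK.
have inH1a : inH1 q a.
  apply: coef_inH1; last by rewrite -/r -sr ca ?eqxx ?xq //; apply/andP; lia.
  move=> n hn; rewrite ca //.
  by case: (eqVneq n s) => [->|]; rewrite ?os ?sr ?leqnn ?orbT ?eqxx.
pose d := mkU (fun n => if n == s then 0 else c cc n).
have cd : forall n, (0 < n <= N)%N -> c d n = if n == s then 0 else c cc n.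
  by move=> n hn; rewrite coef_mkU.
have inH0d : inH0 d.
  apply: coef_inH0 => n hn; rewrite cd //.
  case: (eqVneq n s) => [_|ns nz]; first by rewrite eqxx.
  have [nN|->] : (n < N)%N \/ n = N by case/andP: hn => _; lia.
  - have := gen_nz Ha Hg' (eq_leq Hsr) (ltac:(apply/andP; lia) : (0 < n < N)%N) nz.
    case/andP=> -> sn /=; move/eqP: ns => ns; move: sr sn ns; rewrite /r; lia.
  - by rewrite eqxx.
have mad : mul a d = cc.
  apply: eqU => n /andP[n0 nN]; rewrite coef_mul //.
  rewrite (bigD1 ord0) //= subn0 fr_0 mul1r.
  have az : forall i : 'I_n.+1, i != ord0 -> (i : nat) != s -> c a i = 0.
    move=> i i0 ist; rewrite ca ?(negbTE ist) //; apply/andP; split.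
      by rewrite lt0n; move: i0; rewrite -(inj_eq val_inj).
    by rewrite -ltnS (leq_trans (ltn_ord i)).
  case: (ltnP n s) => ns.
    rewrite big1 ?addr0; last first.
      by move=> i i0; rewrite az ?mul0r //; rewrite neq_ltn (leq_ltn_trans _ ns) // -ltnS.
    by rewrite cd ?n0 ?nN // (ltn_eqF ns).
  have sn1 : (s < n.+1)%N by [].
  rewrite (bigD1 (Ordinal sn1)) /=; last by rewrite -(inj_eq val_inj) /= -lt0n.
  rewrite big1 ?addr0; last first.
    move=> i /andP[i0 ist]; by rewrite az ?mul0r.
  rewrite ca ?eqxx; last by rewrite s0 ltnW.
  have [sn|<-] : (s < n)%N \/ s = n by lia.
    rewrite cd ?n0 ?nN // (gtn_eqF sn).
    have -> : c d (n - s) = 0.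
      rewrite cd; last by apply/andP; lia.
      case: eqP => // nss; apply: cclow; lia.
    by rewrite fr0 mulr0 addr0.
  by rewrite subnn coef0 fr1 mulr1 cd ?eqxx ?add0r ?ccs // s0 ltnW.
have inH1c : inH1 q cc.
  apply: coef_inH1; last by rewrite -/r -sr ccs xq.
  move=> n /andP[n0 nN] nz.
  have [{}nN|->] : (n < N)%N \/ n = N; [lia| |by rewrite eqxx].
  have := gen_nz Ha Hg' (eq_leq Hsr) (ltac:(apply/andP; lia) : (0 < n < N)%N) nz.
  case/andP=> -> sn /=; apply/orP; right; move: sr sn; rewrite /r; lia.
exists a; split => //.
rewrite -/cc -mad Hmul //; last exact: inH0_inH1.
rewrite (Hext _ inH0d) /psit cd; last by rewrite N_gt0 leqnn.
rewrite (gtn_eqF sN) ccN.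
apply: contra psiw => /eqP H.
by rewrite -(inj_eq (mulfI (Hnz _ inH1a))) mulr1 H.
Qed.

End Psi.

End U.

Unset Implicit Arguments.
Set Strict Implicit.

Theorem lemma2p3 (p m : nat) (F : finFieldType) (h : nat) (psi : F -> algC) :
  prime p -> (0 < m)%N -> #|F| = ((p ^ m) ^ 2)%N -> (2 <= h)%N ->
  additive_char psi ->
  (exists x : F, psi (x ^+ (p ^ m)) != psi x) ->
  [/\
   (* (a) *)
   (forall g a : Uel F h, inH (p ^ m) g -> inH0 a ->
      inH0 (conjU (p ^ m) g a) /\ psit psi (conjU (p ^ m) g a) = psit psi a),
   (* (b) *)
   (odd h -> forall g : Uel F h, ~~ inH (p ^ m) g ->
      exists a : Uel F h, [/\ inH0 a, inH0 (conjU (p ^ m) g a) &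
        psit psi (conjU (p ^ m) g a) != psit psi a]) &
   (* (c) *)
   (~~ odd h -> forall theta : Uel F h -> algC,
      (forall x y : Uel F h, inH1 (p ^ m) x -> inH1 (p ^ m) y ->
         theta (mulU (p ^ m) x y) = theta x * theta y) ->
      (forall x : Uel F h, inH1 (p ^ m) x -> theta x != 0) ->
      (forall a : Uel F h, inH0 a -> theta a = psit psi a) ->
      forall g : Uel F h, ~~ inH (p ^ m) g ->
      exists a : Uel F h, [/\ inH1 (p ^ m) a, inH1 (p ^ m) (conjU (p ^ m) g a) &
        theta (conjU (p ^ m) g a) != theta a])].
Proof.
move=> pr m0 card h2 Hpsi [w Hw].
have q_gt0 : (0 < p ^ m)%N by rewrite expn_gt0 prime_gt0.
have pc : p \in [pchar F].
  by apply: (@card_finPcharP _ p (m * 2)) => //; rewrite card expnM.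
have HqD : forall x y : F, (x + y) ^+ (p ^ m) = x ^+ (p ^ m) + y ^+ (p ^ m).
  by move=> x y; apply: exprDn_pchar; rewrite pnatX (pnatE _ pr) pc.
have Hqq : forall x : F, (x ^+ (p ^ m)) ^+ (p ^ m) = x.
  by move=> x; rewrite -exprM mulnn -card expf_card.
split.
- move=> g a Hg Ha; exact: (partA q_gt0 HqD h2 Hw).
- move=> ho g ng.
  have [j Hj] := notinH_odd (F := F) q_gt0 h2 ho ng.
  have [r [or r0 rh nz Hg]] := min_odd (ex_intro _ j Hj).
  have rh' : (r < h.-1)%N.
    have h0 : (0 < h)%N by apply: leq_trans h2.
    have rne : r != h.-1.
      apply/eqP => E; move: ho; rewrite -(prednK h0) /= -E or.
      by [].
    by move: rh rne; rewrite -{1}(prednK h0) ltnS leq_eqVlt => /orP[->|].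
  exact: (partB q_gt0 HqD Hqq h2 Hpsi Hw or r0 rh' nz Hg).
- move=> he theta Hmul Hnz Hext g ng.
  case: (notinH_even (F := F) q_gt0 h2 he ng) => [[j Hj]|[Hg nq]].
    have [r [or r0 rh nz Hg]] := min_odd (ex_intro _ j Hj).
    have [a [Ha Hc Hne]] := partB q_gt0 HqD Hqq h2 Hpsi Hw or r0 rh nz Hg.
    exists a; split; try exact: (inH0_inH1 q_gt0 h2).
    by rewrite !Hext.
  exact: (partC2 q_gt0 HqD Hqq h2 Hpsi Hw he Hmul Hnz Hext Hg nq).
Qed.
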